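(* Let $G$ be a reaction network with one-dimensional stoichiometric subspace and let $c^*$ be a total-constant vector. If for a rate-constant vector $\kappa^*$, $G$ has a positive steady state in $\mathcal P_{c^*}$, then: (1) for every $z\in I$, $\phi(\hat\kappa;x_1)$ is well-defined at $z$; (2) for every $k\in\mathcal H\setminus\{\tau\}$, $Y_k(-B_\tau/A_\tau)>0$ (here $-B_\tau/A_\tau$ is the left endpoint of $I$); (3) $\phi(\hat\kappa;x_1)$ is well-defined at the left endpoint of $I$.
   Context: A reaction network $G$ has species $X_1,\dots,X_s$ and $m$ reactions $\sum_{i}\alpha_{ij}X_i\to\sum_i\beta_{ij}X_i$, $\alpha_{ij},\beta_{ij}\in\mathbb Z_{\ge0}$, $(\alpha_{1j},\dots,\alpha_{sj})\neq(\beta_{1j},\dots,\beta_{sj})$. $\mathcal N$ has entries $\beta_{ij}-\alpha_{ij}$, $S=\mathrm{im}\,\mathcal N$. For $\kappa\in\mathbb R^m_{>0}$, $f(\kappa;x)=\mathcal N(\kappa_1\prod_i x_i^{\alpha_{i1}},\dots,\kappa_m\prod_i x_i^{\alpha_{im}})^\top$. Since $S$ is one-dimensional, species are labelled so that $\beta_{11}-\alpha_{11}\ne0$, and there are $\lambda_j\ne0$ ($\lambda_1=1$) with $\beta_{ij}-\alpha_{ij}=\lambda_j(\beta_{i1}-\alpha_{i1})$. For $c\in\mathbb R^{s-1}$, $\mathcal P_c=\{x\in\mathbb R^s_{\ge0}:(\beta_{i1}-\alpha_{i1})x_1-(\beta_{11}-\alpha_{11})x_i=c_{i-1},\ i=2,\dots,s\}$.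 A positive steady state is $x\in\mathbb R^s_{>0}$ with $f(\kappa;x)=0$. Notation for $c^*$: $A_1=1,B_1=0$, $A_i=\frac{\beta_{i1}-\alpha_{i1}}{\beta_{11}-\alpha_{11}}$, $B_i=-\frac{c^*_{i-1}}{\beta_{11}-\alpha_{11}}$ ($i\ge2$). $[i]=\{k:A_k\ne0,B_k/A_k=B_i/A_i\}$ if $A_i\ne0$, $[i]=\{k:A_k=0\}$ otherwise; species labelled so that $1,\dots,r$ represent the $r$ distinct classes. $\varphi_k=\min_j\sum_{i\in[k]}\alpha_{ij}$, $\gamma_{kj}=\sum_{i\in[k]}\alpha_{ij}-\varphi_k$. $\mathcal J=\{i:A_i\ne0\}$, $\mathcal H=\{k\in\{1,\dots,r\}\cap\mathcal J:\gamma_{k1},\dots,\gamma_{km}\text{ not all equal}\}$. Standing assumption: if for some rate constants $G$ has $N$ positive steady states in $\mathcal P_{c^*}$ with $0<N<\infty$, species are labelled so that $1\in\mathcal H$. $I_i=(-B_i/A_i,+\infty)$ if $A_i>0$, $(0,+\infty)$ if $A_i=0$, $(0,-B_i/A_i)$ if $A_i<0$; $I=\bigcap_{k\in\mathcal H}I_k$; $\tau$ is the index in $\mathcal H$ with $A_\tau>0$ such that $-B_\tau/A_\tau$ is the left endpoint of $I$. $Y_i(x_1)=(A_ix_1+B_i)/|A_i|$ if $i\in\mathcal J$, $1$ otherwise; $\mathcal C_j=\prod_{i\in\mathcal J}|A_i|^{\alpha_{ij}}\prod_{i\notin\mathcal J}B_i^{\alpha_{ij}}$; $P_j(x_1)=\mathcal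 C_j\prod_{k\in\mathcal H}Y_k(x_1)^{\gamma_{kj}}$; $\ell$ is an index $j$ minimizing $\gamma_{\tau j}$; $\hat\kappa=(\kappa_1,\dots,\kappa_{\ell-1},\kappa_{\ell+1},\dots,\kappa_m)$ and $\phi(\hat\kappa;x_1)=-\frac{\sum_{j\neq\ell}\lambda_j\kappa_jP_j(x_1)}{\lambda_\ell P_\ell(x_1)}$; $\phi$ is well-defined at $z$ if $P_\ell(z)\neq0$. *)

(* Defs.v *)
From HB Require Import structures.
From mathcomp Require Import all_boot all_order all_algebra.
Set Implicit Arguments. Unset Strict Implicit. Unset Printing Implicit Defensive.
Import Order.TTheory GRing.Theory Num.Theory.
Local Open Scope ring_scope.

(* Conventions: species X_1..X_s are indexed by 'I_(s.+1) (so there are s.+1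
   species; X_1 is ord0), reactions 1..m by 'I_(m.+1) (reaction 1 is ord0).
   The total-constant vector c has s components (c_1..c_{s}, indexed by 'I_s),
   c_{i-1} being attached to species i >= 2, i.e. species (lift ord0 i'). *)

Section ReactionNetwork.
Variables (R : realFieldType) (s m : nat).
Variables (alpha beta : 'I_s.+1 -> 'I_m.+1 -> nat).

Definition Nst (i : 'I_s.+1) (j : 'I_m.+1) : R := (beta i j)%:R - (alpha i j)%:R.
Definition Nmx : 'M[R]_(s.+1, m.+1) := \matrix_(i, j) Nst i j.

Definition fvec (kappa : 'I_m.+1 -> R) (x : 'I_s.+1 -> R) (i : 'I_s.+1) : R :=
  \sum_(j < m.+1) Nst i j * (kappa j * \prod_(i' < s.+1) x i' ^+ alpha i' j).

Definition positive_steady_state (kappa : 'I_m.+1 -> R) (x : 'I_s.+1 -> R) :=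
  (forall i, 0 < x i) /\ (forall i, fvec kappa x i = 0).

Variable c : 'I_s -> R.

Definition in_Pc (x : 'I_s.+1 -> R) :=
  (forall i, 0 <= x i) /\
  (forall i' : 'I_s,
     Nst (lift ord0 i') ord0 * x ord0 - Nst ord0 ord0 * x (lift ord0 i') = c i').

Definition A (i : 'I_s.+1) : R :=
  if i == ord0 then 1 else Nst i ord0 / Nst ord0 ord0.
Definition B (i : 'I_s.+1) : R :=
  if unlift ord0 i is Some i' then - c i' / Nst ord0 ord0 else 0.

Definition cls (i : 'I_s.+1) : {set 'I_s.+1} :=
  if A i != 0 then [set k | (A k != 0) && (B k / A k == B i / A i)]
  else [set k | A k == 0].

Definition classes_represented (r : nat) :=
  [/\ (r <= s.+1)%N,
      (forall i j : 'I_s.+1, (i < r)%N -> (j < r)%N -> i != j -> cls i != cls j)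
    & (forall k : 'I_s.+1, exists2 i : 'I_s.+1, (i < r)%N & k \in cls i)].

Definition varphi (k : 'I_s.+1) : nat :=
  \big[minn/(\sum_(i in cls k) alpha i ord0)%N]_(j < m.+1) (\sum_(i in cls k) alpha i j)%N.
Definition gam (k : 'I_s.+1) (j : 'I_m.+1) : nat :=
  ((\sum_(i in cls k) alpha i j) - varphi k)%N.

Definition inJ (i : 'I_s.+1) : bool := A i != 0.

Definition Hset (r : nat) : {set 'I_s.+1} :=
  [set k : 'I_s.+1 | [&& (k < r)%N, inJ k &
                       [exists j, exists j', gam k j != gam k j']]].

Definition Iint (i : 'I_s.+1) (z : R) : bool :=
  if 0 < A i then - B i / A i < z
  else if A i == 0 then 0 < z
  else (0 < z) && (z < - B i / A i).

Definition inI (r : nat) (z : R) : Prop := forall k, k \in Hset r -> Iint k z.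

Definition is_left_endpoint (S : R -> Prop) (e : R) :=
  (forall z, S z -> e <= z) /\
  (forall e', (forall z, S z -> e' <= z) -> e' <= e).

Definition Y (i : 'I_s.+1) (x : R) : R :=
  if inJ i then (A i * x + B i) / `|A i| else 1.

Definition Cc (j : 'I_m.+1) : R :=
  (\prod_(i | inJ i) `|A i| ^+ alpha i j) * (\prod_(i | ~~ inJ i) B i ^+ alpha i j).

Definition Ppoly (r : nat) (j : 'I_m.+1) (x : R) : R :=
  Cc j * \prod_(k in Hset r) Y k x ^+ gam k j.

Definition phi_well_defined (r : nat) (ell : 'I_m.+1) (z : R) : Prop :=
  Ppoly r ell z != 0.

End ReactionNetwork.

(* Main.v *)
Require Import Defs.
From HB Require Import structures.
From mathcomp Require Import all_boot all_order all_algebra.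
From mathcomp Require Import ring lra.
Import Order.TTheory GRing.Theory Num.Theory.
Local Open Scope ring_scope.

Section Helpers.
Variables (R : realFieldType) (s m : nat) (alpha beta : 'I_s.+1 -> 'I_m.+1 -> nat) (c : 'I_s -> R).
Hypothesis N00 : Nst R alpha beta ord0 ord0 != 0.

Lemma xAB x : in_Pc alpha beta c x -> forall i,
  x i = A R alpha beta i * x ord0 + B alpha beta c i.
Proof.
move=> [_ hP] i; rewrite /A /B.
case: (unliftP ord0 i) => [i'|] ->.
  rewrite eq_sym (negbTE (neq_lift _ _)).
  rewrite -(hP i'). by field.
by rewrite eqxx mul1r addr0.
Qed.

Lemma pos_lin (a b z : R) : a != 0 ->
  a * z + b = a * (z - (- b / a)).
Proof. move=> ha; by field. Qed.

End Helpers.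

Theorem lemma5p12 (R : realFieldType) (s m : nat)
  (alpha beta : 'I_s.+1 -> 'I_m.+1 -> nat) (cstar : 'I_s -> R)
  (r : nat) (tau : 'I_s.+1) (ell : 'I_m.+1) (kstar : 'I_m.+1 -> R) :
  (* reactions: reactant and product complexes differ *)
  (forall j, exists i, alpha i j != beta i j) ->
  (* one-dimensional stoichiometric subspace *)
  \rank (Nmx R alpha beta) = 1%N ->
  (* labelling: beta_11 - alpha_11 <> 0 *)
  Nst R alpha beta ord0 ord0 != 0 ->
  (* species 1..r represent the r distinct classes *)
  classes_represented alpha beta cstar r ->
  (* tau: index in H with A_tau > 0 and -B_tau/A_tau the left endpoint of I *)
  tau \in Hset alpha beta cstar r ->
  0 < A R alpha beta tau ->
  is_left_endpoint (inI alpha beta cstar r)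
    (- B alpha beta cstar tau / A R alpha beta tau) ->
  (* ell minimizes gamma_{tau j} *)
  (forall j, (gam alpha beta cstar tau ell <= gam alpha beta cstar tau j)%N) ->
  (* kappa* positive, with a positive steady state in P_{c*} *)
  (forall j, 0 < kstar j) ->
  (exists x, in_Pc alpha beta cstar x /\ positive_steady_state alpha beta kstar x) ->
  [/\ (forall z, inI alpha beta cstar r z -> phi_well_defined alpha beta cstar r ell z),
      (forall k, k \in Hset alpha beta cstar r -> k != tau ->
         0 < Y alpha beta cstar k (- B alpha beta cstar tau / A R alpha beta tau))
    & phi_well_defined alpha beta cstar r ell (- B alpha beta cstar tau / A R alpha beta tau)].
Proof.
move=> _ _ N00 [_ hcls _] tauH Atau [lep1 lep2] ellmin _ [x [xP [xpos _]]].
set A' := A R alpha beta. set B' := B alpha beta cstar.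
have hx := @xAB _ _ _ _ _ _ N00 _ xP.
have HJ k : k \in Hset alpha beta cstar r -> (k < r)%N /\ A' k != 0.
  by rewrite inE => /and3P [kr kJ _].
have Bpos i : A' i = 0 -> 0 < B' i.
  by move=> h; have := xpos i; rewrite hx -/A' -/B' h mul0r add0r.
have Ccpos j : 0 < Cc alpha beta cstar j.
  apply: mulr_gt0; apply: prodr_gt0 => i hi; apply: exprn_gt0.
    by rewrite normr_gt0.
  by apply: Bpos; move: hi; rewrite /inJ negbK => /eqP.
have Ipos k z : A' k != 0 -> Iint alpha beta cstar k z -> 0 < A' k * z + B' k.
  move=> hA; rewrite /Iint -/A' -/B' (pos_lin _ _ _ _ hA) (negbTE hA).
  case: ltgtP hA => // hA' _.
    by move=> hz; rewrite pmulr_rgt0 // subr_gt0.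
  by move=> /andP [_ hz]; rewrite nmulr_rgt0 // subr_lt0.
have Ix : inI alpha beta cstar r (x ord0).
  move=> k _; rewrite /Iint -/A' -/B'.
  have xk := xpos k; rewrite hx -/A' -/B' in xk.
  case: ltgtP => hA.
  - have hA0 : A' k != 0 by rewrite gt_eqF.
    by move: xk; rewrite (pos_lin _ _ _ _ hA0) pmulr_rgt0 // subr_gt0.
  - have hA0 : A' k != 0 by rewrite lt_eqF.
    apply/andP; split; first exact: xpos.
    by move: xk; rewrite (pos_lin _ _ _ _ hA0) nmulr_rgt0 // subr_lt0.
  - exact: xpos.
have Ypos k z : k \in Hset alpha beta cstar r -> Iint alpha beta cstar k z ->
    0 < Y alpha beta cstar k z.
  move=> hk hz; have [_ hA] := HJ k hk.
  rewrite /Y /inJ -/A' -/B' hA divr_gt0 ?normr_gt0 //; exact: Ipos.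
set e := - B' tau / A' tau.
have Atau0 : A' tau != 0 by rewrite gt_eqF.
have P2 : forall k, k \in Hset alpha beta cstar r -> k != tau ->
    0 < Y alpha beta cstar k e.
  move=> k hk ktau.
  have [kr hA] := HJ k hk; have [taur _] := HJ tau tauH.
  have neq : - B' k / A' k != e.
    apply: contra (hcls k tau kr taur ktau) => /eqP he; apply/eqP.
    have he' : B' k / A' k = B' tau / A' tau.
      by move: he; rewrite /e !mulNr => /oppr_inj.
    by rewrite /cls -/A' -/B' hA Atau0 he'.
  rewrite /Y /inJ -/A' -/B' hA divr_gt0 ?normr_gt0 // (pos_lin _ _ _ _ hA).
  have Ixk := Ix k hk; rewrite /Iint -/A' -/B' in Ixk.
  case: (ltgtP (A' k) 0) hA Ixk => // hA' _.
  - move=> /andP [_ hx0].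
    rewrite nmulr_rgt0 // subr_lt0.
    exact: (le_lt_trans (lep1 _ Ix) hx0).
  - move=> _; rewrite pmulr_rgt0 // subr_gt0 lt_neqAle neq /=.
    apply: lep2 => z hz; have := hz k hk; rewrite /Iint -/A' -/B' hA'.
    exact: ltW.
have gam0 : gam alpha beta cstar tau ell = 0%N.
  have [j0 hj0] : exists j0, varphi alpha beta cstar tau =
      (\sum_(i in cls alpha beta cstar tau) alpha i j0)%N.
    rewrite /varphi; apply: (big_ind (fun v => exists j0, v =
      (\sum_(i in cls alpha beta cstar tau) alpha i j0)%N)).
    - by exists ord0.
    - move=> a b [ja ->] [jb ->]; rewrite /minn; case: ifP => _; by eexists.
    - by move=> j _; exists j.
  apply/eqP; rewrite -leqn0; apply: leq_trans (ellmin j0) _.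
  by rewrite /gam -hj0 subnn.
split.
- move=> z hz; rewrite /phi_well_defined gt_eqF // /Ppoly mulr_gt0 //.
  apply: prodr_gt0 => k hk; exact: exprn_gt0 (Ypos k z hk (hz k hk)).
- exact: P2.
rewrite /phi_well_defined gt_eqF // /Ppoly mulr_gt0 //.
rewrite (bigD1 tau) //= gam0 expr0 mul1r.
apply: prodr_gt0 => k /andP [hk ktau]; exact: exprn_gt0 (P2 k hk ktau).
Qed.
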